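(* Let $(P,h)$ be a minimal floor plan. Then $B(P,h)\subseteq P$. In particular, if $(P,Q,h)$ is a minimal compatible floor plan, then $B(P,h)\subseteq P$ and $B(Q,h)\subseteq Q$.
   Context: A floor plan is a pair $(P,h)$ of sequences $P=(p_1,\dots,p_r)$, $p_i\in\mathbb{N}^2$, and $h=(h_1,\dots,h_r)$, $h_i$ positive integers; a compatible floor plan is a triple $(P,Q,h)$ with $(P,h),(Q,h)$ floor plans. ''$q\in P$'' means $q=p_i$ for some $i$. A North-East path is a sequence $(q_1,\dots,q_m)$ in $\mathbb{N}^2$ with $q_{j+1}-q_j\in\{(1,0),(0,1)\}$, originating at $q_1$; its score w.r.t. $(P,h)$ is $\sum_{i:\,p_i\in\{q_1,\dots,q_m\}}h_i$, and $\max\mathrm{score}_{(P,h)}(q)$ is the maximal score of a path originating at $q$. Let $\lambda_{(P,h)}=\{(x,y,z)\in\mathbb{N}^3: z<\max\mathrm{score}_{(P,h)}(x,y)\}$. For floor plans with the same $h$: $(P',h)\le(P,h)$ iff $\lambda_{(P',h)}\subseteq\lambda_{(P,h)}$. For compatible floor plans with the same $h$: $(P',Q',h)\le(P,Q,h)$ iff $\lambda_{(P',h)}\subseteq\lambda_{(P,h)}$, $\lambda_{(Q',h)}\subseteq\lambda_{(Q,h)}$, and $|\lambda_{(P',h)}\cap\lambda_{(Q',h)}|\le|\lambda_{(P,h)}\cap\lambda_{(Q,h)}|$. A (compatible) floor plan is minimal if it is minimal for these relations, i.e. there is no other one with the same $h$ that is $\le$ it but not $\ge$ it. The support is $\mathrm{supp}(P,h)=\{q\in\mathbb{N}^2:\max\mathrm{score}_{(P,h)}(q)>0\}$,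 and the border $B(P,h)$ is the set of $q\in\mathrm{supp}(P,h)$ such that $q+(1,0)\notin\mathrm{supp}(P,h)$ or $q+(0,1)\notin\mathrm{supp}(P,h)$. *)

(* Defs.v *)
From mathcomp Require Import all_boot.
From mathcomp Require Import boolp.

Set Implicit Arguments.
Unset Strict Implicit.
Unset Printing Implicit Defensive.

Definition pt := (nat * nat)%type.

Definition floor_plan (P : seq pt) (h : seq nat) : Prop :=
  size P = size h /\ all (fun k => 0 < k) h.

Definition ne_step (a b : pt) : bool :=
  (b == (a.1.+1, a.2)) || (b == (a.1, a.2.+1)).

(* A North-East path (q_1, ..., q_m) is encoded as q_1 = q and
   (q_2, ..., q_m) = s; it originates at q. *)
Definition ne_path (q : pt) (s : seq pt) : bool := path ne_step q s.

Definition score (P : seq pt) (h : seq nat) (q : pt) (s : seq pt) : nat :=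
  \sum_(i < size P | nth (0, 0) P i \in q :: s) nth 0 h i.

(* maximal score of a NE path originating at q.  All scores are <= sum of h,
   so the maximum is taken over the (nonempty) set of achieved values below that bound. *)
Definition maxscore (P : seq pt) (h : seq nat) (q : pt) : nat :=
  \max_(v < (sumn h).+1 |
        `[< exists s : seq pt, ne_path q s /\ score P h q s = v >]) v.

Definition lambda (P : seq pt) (h : seq nat) (t : nat * nat * nat) : Prop :=
  t.2 < maxscore P h (t.1.1, t.1.2).

Definition subset3 (A B : nat * nat * nat -> Prop) : Prop :=
  forall t, A t -> B t.

Definition has_card (A : nat * nat * nat -> Prop) (n : nat) : Prop :=
  exists s : seq (nat * nat * nat),
    uniq s /\ (forall t, t \in s <-> A t) /\ size s = n.

Definition card_le (A B : nat * nat * nat -> Prop) : Prop :=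
  forall n m, has_card A n -> has_card B m -> n <= m.

Definition inter3 (A B : nat * nat * nat -> Prop) t : Prop := A t /\ B t.

Definition fp_le (P' P : seq pt) (h : seq nat) : Prop :=
  subset3 (lambda P' h) (lambda P h).

Definition cfp_le (P' Q' P Q : seq pt) (h : seq nat) : Prop :=
  subset3 (lambda P' h) (lambda P h) /\
  subset3 (lambda Q' h) (lambda Q h) /\
  card_le (inter3 (lambda P' h) (lambda Q' h)) (inter3 (lambda P h) (lambda Q h)).

Definition minimal_fp (P : seq pt) (h : seq nat) : Prop :=
  floor_plan P h /\
  forall P', floor_plan P' h -> fp_le P' P h -> fp_le P P' h.

Definition minimal_cfp (P Q : seq pt) (h : seq nat) : Prop :=
  floor_plan P h /\ floor_plan Q h /\
  forall P' Q', floor_plan P' h -> floor_plan Q' h ->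
    cfp_le P' Q' P Q h -> cfp_le P Q P' Q' h.

Definition supp (P : seq pt) (h : seq nat) (q : pt) : Prop :=
  0 < maxscore P h q.

Definition border (P : seq pt) (h : seq nat) (q : pt) : Prop :=
  supp P h q /\ (~ supp P h (q.1.+1, q.2) \/ ~ supp P h (q.1, q.2.+1)).

(* Main.v *)
Require Import Defs.
From mathcomp Require Import all_boot boolp.
From mathcomp Require Import zify.

Set Implicit Arguments.
Unset Strict Implicit.
Unset Printing Implicit Defensive.

Lemma sum_nth_le (h : seq nat) n : \sum_(0 <= i < n) nth 0 h i <= sumn h.
Proof.
elim: h n => [|a h IH] n.
  by rewrite big1 // => i _; rewrite nth_nil.
case: n => [|n]; first by rewrite big_geq.
rewrite big_nat_recl //=.
by rewrite leq_add2l.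
Qed.

Lemma score_le_sumn P h q s : score P h q s <= sumn h.
Proof.
rewrite /score big_mkcond /=.
apply: leq_trans (sum_nth_le h (size P)).
rewrite big_mkord.
by apply: leq_sum => i _; case: ifP.
Qed.

Lemma ms_ge P h q s : ne_path q s -> score P h q s <= maxscore P h q.
Proof.
move=> Hs; rewrite /maxscore.
have Hb : score P h q s < (sumn h).+1 by rewrite ltnS score_le_sumn.
have := @leq_bigmax_cond _ (fun v : 'I_(sumn h).+1 =>
   `[< exists s0 : seq pt, ne_path q s0 /\ score P h q s0 = v >])
   (fun v => nat_of_ord v) (Ordinal Hb).
apply; apply: asboolT; by exists s.
Qed.

Lemma ms_le P h q m :
  (forall s, ne_path q s -> score P h q s <= m) -> maxscore P h q <= m.
Proof.
move=> H; rewrite /maxscore; apply/bigmax_leqP => i /asboolP [s [Hs <-]].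
exact: H.
Qed.

Lemma path_ge a s x : ne_path a s -> x \in s -> a.1 <= x.1 /\ a.2 <= x.2.
Proof.
elim: s a => [|b s IH] a //=.
case/andP => Hab Hp; rewrite in_cons => /orP [/eqP ->|Hx].
  by case/orP: Hab => /eqP -> /=; lia.
have [H1 H2] := IH _ Hp Hx.
by case/orP: Hab => /eqP Eb; rewrite Eb /= in H1 H2; lia.
Qed.

Lemma path_ge' a s x : ne_path a s -> x \in a :: s -> a.1 <= x.1 /\ a.2 <= x.2.
Proof.
move=> Hp; rewrite in_cons => /orP [/eqP ->|]; first by [].
exact: path_ge.
Qed.

Fixpoint rightp (p : pt) n : seq pt :=
  if n is n'.+1 then (p.1.+1, p.2) :: rightp (p.1.+1, p.2) n' else [::].
Fixpoint upp (p : pt) n : seq pt :=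
  if n is n'.+1 then (p.1, p.2.+1) :: upp (p.1, p.2.+1) n' else [::].

Lemma path_rightp p n : path ne_step p (rightp p n).
Proof.
elim: n p => [|n IH] p //=.
by rewrite IH andbT /ne_step eqxx.
Qed.

Lemma path_upp p n : path ne_step p (upp p n).
Proof.
elim: n p => [|n IH] p //=.
by rewrite IH andbT /ne_step eqxx orbT.
Qed.

Lemma last_rightp p n : last p (rightp p n) = (p.1 + n, p.2).
Proof.
elim: n p => [|n IH] p /=; first by rewrite addn0; case: p.
by rewrite IH /= addSnnS.
Qed.

Lemma last_upp p n : last p (upp p n) = (p.1, p.2 + n).
Proof.
elim: n p => [|n IH] p /=; first by rewrite addn0; case: p.
by rewrite IH /= addSnnS.
Qed.

Lemma mem_rightp p n x :
  x.2 = p.2 -> p.1 < x.1 <= p.1 + n -> x \in rightp p n.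
Proof.
elim: n p => [|n IH] p /= E H; first by lia.
rewrite in_cons; case: (eqVneq x.1 p.1.+1) => E1.
  by apply/orP; left; apply/eqP; case: x E H E1 {IH} => a b /= -> _ ->.
apply/orP; right; apply: IH => //=; lia.
Qed.

Lemma reach r t : r.1 <= t.1 -> r.2 <= t.2 ->
  exists s, ne_path r s /\ last r s = t.
Proof.
move=> H1 H2.
exists (rightp r (t.1 - r.1) ++ upp (r.1 + (t.1 - r.1), r.2) (t.2 - r.2)).
rewrite /ne_path cat_path (path_rightp r) last_rightp (path_upp _) last_cat last_rightp.
rewrite last_upp /=; split => //.
case: t H1 H2 => a b /= H1 H2; congr pair; lia.
Qed.

Lemma score_ge_one P h q s k : k < size P -> nth (0,0) P k \in q :: s ->
  nth 0 h k <= score P h q s.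
Proof.
move=> Hk Hin; rewrite /score (bigD1 (Ordinal Hk)) //=.
exact: leq_addr.
Qed.

Lemma ms_ge_pt P h r k : k < size P -> r.1 <= (nth (0,0) P k).1 ->
  r.2 <= (nth (0,0) P k).2 -> nth 0 h k <= maxscore P h r.
Proof.
move=> Hk H1 H2; have [s [Hs Hl]] := reach H1 H2.
apply: leq_trans (ms_ge P h Hs).
apply: score_ge_one => //; rewrite -Hl; exact: mem_last.
Qed.

Lemma core P h q : floor_plan P h -> q \notin P -> supp P h q ->
  ~ supp P h (q.1, q.2.+1) ->
  exists P', floor_plan P' h /\ fp_le P' P h /\ ~ fp_le P P' h.
Proof.
move=> [Hsz Hall] HqP Hsupp Hn.
have Hn0 : maxscore P h (q.1, q.2.+1) = 0 by move: Hn; rewrite /supp; lia.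
have hpos : forall k, k < size P -> 0 < nth 0 h k.
  by move=> k Hk; apply: (allP Hall); apply: mem_nth; rewrite -Hsz.
have Hrow : forall k, k < size P -> q.1 <= (nth (0,0) P k).1 ->
    q.2 <= (nth (0,0) P k).2 ->
    (nth (0,0) P k).2 = q.2 /\ q.1 < (nth (0,0) P k).1.
  move=> k Hk H1 H2.
  have Hq2 : (nth (0,0) P k).2 = q.2.
    suff : ~ q.2 < (nth (0,0) P k).2 by lia.
    move=> Hlt; have := @ms_ge_pt P h (q.1,q.2.+1) k Hk H1 Hlt.
    rewrite Hn0; have := hpos k Hk; lia.
  split => //.
  have Hne : nth (0,0) P k != q.
    by apply: contra HqP => /eqP <-; exact: mem_nth.
  rewrite ltn_neqAle H1 andbT; apply: contra Hne => /eqP E; apply/eqP.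
  by apply: injective_projections.
have [j Hj] : exists j : 'I_(size P),
    (q.1 <= (nth (0,0) P j).1) && (q.2 <= (nth (0,0) P j).2).
  case: (pickP (fun j : 'I_(size P) =>
    (q.1 <= (nth (0,0) P j).1) && (q.2 <= (nth (0,0) P j).2))) => [j Hj|H0].
    by exists j.
  exfalso; move: Hsupp; rewrite /supp.
  suff : maxscore P h q <= 0 by lia.
  apply: ms_le => s Hs; rewrite /score big1 // => i Hi.
  have [H1 H2] := path_ge' Hs Hi.
  by move: (H0 i); rewrite /= H1 H2.
move/andP: Hj => [Hj1 Hj2]; have [Erow Hlt] := Hrow j (ltn_ord j) Hj1 Hj2.
pose P' := set_nth (0,0) P j q.
have Hsz' : size P' = size P.
  by rewrite size_set_nth; apply/maxn_idPr; exact: ltn_ord.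
have Hnth' : forall k, nth (0,0) P' k = if k == j then q else nth (0,0) P k.
  by move=> k; rewrite nth_set_nth.
pose N := \max_(k < size P) (nth (0,0) P k).1.
have HN : forall k : 'I_(size P), (nth (0,0) P k).1 <= N.
  by move=> k; exact: (leq_bigmax (F := fun k : 'I_(size P) => (nth (0,0) P k).1)).
exists P'; split; first by split => //; rewrite Hsz'.
split.
- move=> [[x y] z]; rewrite /lambda /= => Hz; apply: leq_trans Hz _.
  set r := (x, y).
  apply: ms_le => s Hs.
  case Hq: (q \in r :: s).
  + case/splitPl: Hq Hs => s1 s2 Hlast.
    rewrite /ne_path cat_path Hlast => /andP [Hs1 Hs2].
    have Hp : ne_path r (s1 ++ rightp q N).
      by rewrite /ne_path cat_path Hs1 Hlast path_rightp.
    apply: leq_trans (ms_ge P h Hp).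
    have key : forall k : 'I_(size P), nth (0,0) P' k \in r :: s1 ++ s2 ->
        nth (0,0) P k \in r :: s1 ++ rightp q N.
      move=> k; rewrite Hnth'; case: eqP => [Ek|_] Hin.
        rewrite in_cons mem_cat; apply/orP; right; apply/orP; right.
        rewrite Ek; apply: mem_rightp => //; rewrite Hlt /=.
        exact: leq_trans (HN j) (leq_addl _ _).
      move: Hin; rewrite !in_cons !mem_cat => /orP [->//|/orP [->|Hin2]].
        by rewrite orbT.
      have [H1 H2] := path_ge Hs2 Hin2.
      have [E Hl] := Hrow k (ltn_ord k) H1 H2.
      apply/orP; right; apply/orP; right.
      apply: mem_rightp => //; rewrite Hl /=.
      exact: leq_trans (HN k) (leq_addl _ _).
    rewrite /score Hsz' big_mkcond [X in _ <= X]big_mkcond.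
    apply: leq_sum => k _; case: ifP => // /key ->; exact: leqnn.
  + apply: leq_trans (ms_ge P h Hs).
    rewrite /score Hsz' big_mkcond [X in _ <= X]big_mkcond.
    apply: leq_sum => k _; rewrite Hnth'; case: eqP => _; first by rewrite Hq.
    exact: leqnn.
- move=> Hle.
  have := Hle ((nth (0,0) P j).1, (nth (0,0) P j).2, maxscore P' h (nth (0,0) P j)).
  rewrite /lambda /= -surjective_pairing ltnn.
  set pj := nth (0,0) P j.
  have : maxscore P' h pj <= maxscore P h pj - nth 0 h j.
    apply: ms_le => s Hs; have := ms_ge P h Hs.
    suff : score P' h pj s + nth 0 h j <= score P h pj s by lia.
    have Hq : q \notin pj :: s.
      by apply/negP => /(path_ge' Hs) [H1 _]; move: Hlt; rewrite ltnNge H1.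
    rewrite /score Hsz' !big_mkcond (bigD1 j) //= [X in _ <= X](bigD1 j) //=.
    rewrite Hnth' eqxx (negbTE Hq) add0n addnC leq_add2l.
    rewrite [X in _ <= X](eq_bigl (fun i : 'I_(size P) => (i != j) && (nth (0,0) P i \in pj :: s))); last by move=> i; rewrite andbC.
    rewrite [X in _ <= X]big_mkcondr.
    apply: leq_sum => k Hk; rewrite Hnth'.
    have Hk' : (k == j :> nat) = false by apply/negbTE.
    by rewrite Hk'.
    exact: mem_head.
  move=> H1 H2; suff : maxscore P' h pj < maxscore P h pj by move/H2.
  have := hpos j (ltn_ord j); have := @ms_ge_pt P h pj j (ltn_ord j) (leqnn _) (leqnn _).
  move: H1; lia.
Qed.

Definition swap (x : pt) : pt := (x.2, x.1).
Lemma swapK : cancel swap swap. Proof. by case. Qed.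

Lemma ne_step_swap a b : ne_step (swap a) (swap b) = ne_step a b.
Proof.
case: a b => a1 a2 [b1 b2]; rewrite /ne_step /swap /= !xpair_eqE orbC.
by congr orb; apply: andbC.
Qed.

Lemma path_swap q s : ne_path (swap q) (map swap s) = ne_path q s.
Proof.
elim: s q => [|b s IH] q //=.
by rewrite ne_step_swap; congr andb; apply: IH.
Qed.

Lemma score_swap P h q s :
  score (map swap P) h (swap q) (map swap s) = score P h q s.
Proof.
rewrite /score size_map; apply: eq_bigl => i.
rewrite (nth_map (0,0)) // -map_cons mem_map //; exact: can_inj swapK.
Qed.

Lemma ms_swap P h q : maxscore (map swap P) h (swap q) = maxscore P h q.
Proof.
apply/eqP; rewrite eqn_leq; apply/andP; split.
- apply: ms_le => s Hs; rewrite -[s](mapK swapK) score_swap.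
  apply: ms_ge; by rewrite -path_swap (mapK swapK).
- apply: ms_le => s Hs; rewrite -score_swap; apply: ms_ge; by rewrite path_swap.
Qed.

Lemma lambda_swap P h x y z :
  lambda (map swap P) h (x, y, z) <-> lambda P h (y, x, z).
Proof. by rewrite /lambda /= -[(x, y)]/(swap (y, x)) ms_swap. Qed.

Lemma fp_le_swap A B h : fp_le A B h -> fp_le (map swap A) (map swap B) h.
Proof. by move=> H [[x y] z] /lambda_swap /H /lambda_swap. Qed.

Lemma core_any P h q : floor_plan P h -> border P h q -> q \notin P ->
  exists P', floor_plan P' h /\ fp_le P' P h /\ ~ fp_le P P' h.
Proof.
move=> Hfp [Hs [H1|H2]] Hq; last exact: (core Hfp Hq Hs H2).
have Hfp' : floor_plan (map swap P) h.
  by case: Hfp; rewrite /floor_plan size_map.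
have Ha : swap q \notin map swap P by rewrite (mem_map (can_inj swapK)).
have Hb : supp (map swap P) h (swap q) by rewrite /supp ms_swap.
have Hc : ~ supp (map swap P) h ((swap q).1, (swap q).2.+1).
  by rewrite /supp -[(_, _)]/(swap (q.1.+1, q.2)) ms_swap.
have [P'' [Hf [Hle Hnle]]] := core Hfp' Ha Hb Hc.
exists (map swap P''); split; first by case: Hf; rewrite /floor_plan size_map.
split.
- by have := fp_le_swap Hle; rewrite (mapK swapK).
- move=> H; apply: Hnle; by have := fp_le_swap H; rewrite (mapK swapK).
Qed.

Lemma card_le_sub A B : subset3 A B -> card_le A B.
Proof.
move=> H n m [s [Hu [Hs <-]]] [t [Ht [Htt <-]]].
by apply: uniq_leq_size Hu _ => x /Hs /H /Htt.
Qed.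

Lemma has_card_inter_sym A B n :
  has_card (inter3 A B) n -> has_card (inter3 B A) n.
Proof.
move=> [s [Hu [Hs Hn]]]; exists s; split => //; split => // t.
split => [/Hs [? ?]|[? ?]]; first by split.
by apply/Hs; split.
Qed.

Lemma cfp_le_sym A B C D h : cfp_le A B C D h -> cfp_le B A D C h.
Proof.
move=> [H1 [H2 H3]]; split => //; split => //.
move=> n m Hn Hm; apply: H3; exact: has_card_inter_sym.
Qed.

Lemma minimal_cfp_sym P Q h : minimal_cfp P Q h -> minimal_cfp Q P h.
Proof.
move=> [HP [HQ Hmin]]; split => //; split => //.
move=> P' Q' HP' HQ' Hle; apply: cfp_le_sym.
by apply: (Hmin Q' P' HQ' HP'); exact: cfp_le_sym.
Qed.

Lemma cfp_main P Q h : minimal_cfp P Q h ->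
  forall q : pt, border P h q -> q \in P.
Proof.
move=> [HP [HQ Hmin]] q Hb; case: (boolP (q \in P)) => // Hq.
have [P' [Hf [Hle Hnle]]] := core_any HP Hb Hq.
have : cfp_le P' Q P Q h.
  split => //; split => //.
  by apply: card_le_sub => t [Ha Hb']; split => //; exact: Hle.
by move/(Hmin P' Q Hf HQ) => [H _]; case: (Hnle H).
Qed.

Theorem proposition5p1 :
  (forall (P : seq pt) (h : seq nat),
     minimal_fp P h -> forall q : pt, border P h q -> q \in P) /\
  (forall (P Q : seq pt) (h : seq nat),
     minimal_cfp P Q h ->
     (forall q : pt, border P h q -> q \in P) /\
     (forall q : pt, border Q h q -> q \in Q)).
Proof.
split.
- move=> P h [Hfp Hmin] q Hb; case: (boolP (q \in P)) => // Hq.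
  have [P' [Hf [Hle Hnle]]] := core_any Hfp Hb Hq.
  by case: (Hnle (Hmin P' Hf Hle)).
- move=> P Q h Hm; split; first exact: cfp_main Hm.
  exact: cfp_main (minimal_cfp_sym Hm).
Qed.
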